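(* Let $\mathsf{CS}$ be a constant specification for $\mathsf{J4C}^+$. For every set of formulas $T$ and formula $\phi$: if $T\models_{\mathsf{J4C}^+_{\mathsf{CS}}}\phi$, then $T\vdash_{\mathsf{J4C}^+_{\mathsf{CS}}}\phi$.
   Context: Language: countable sets $\mathsf{Const}$, $\mathsf{Var}$, $\mathsf{Prop}$; terms $t ::= c \mid x \mid t\cdot t \mid t+t \mid\ !t$; formulas $\phi ::= p \mid \neg\phi \mid \phi\wedge\phi \mid \phi\supset\phi \mid \phi>\phi \mid t{:}\phi$; $\mathsf{Tm},\mathsf{Fm}$ the sets of terms and formulas. Axiom schemes of $\mathsf{J4C}^+$: (A1) all instances of classical tautologies; (A2) $(\phi>(\psi\supset\chi))\supset((\phi>\psi)\supset(\phi>\chi))$; (A3) $\phi>\phi$; (A4) $(\phi>\psi)\supset(\phi\supset\psi)$; (A5) $(s{:}(\phi>\psi)\wedge t{:}\phi) > (s\cdot t){:}\psi$; (A6) $s{:}\phi > (s+t){:}\phi$; (A7) $t{:}\phi>(s+t){:}\phi$; (A9) $t{:}\phi > (!t){:}t{:}\phi$ (there is no scheme $t{:}\phi>\phi$). A constant specification $\mathsf{CS}$ is a set of $c{:}\phi$ with $c\in\mathsf{Const}$, $\phi$ an instance of these schemes. $\mathsf{J4C}^+_{\mathsf{CS}}$: these axioms and $\mathsf{CS}$; rules (MP) from $\phi,\phi\supset\psi$ infer $\psi$, and (RCN) from $\psi$ infer $\phi>\psi$. $T\vdash\phi$ iff $\vdash(\psi_1\wedge\cdots\wedge\psi_n)\supset\phi$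 for some $\psi_1,\dots,\psi_n\in T$, $n\ge0$. Relational models $\mathcal M=(W,W_N,R_{Fm},R_{Tm},V)$: $W$ nonempty, $W_N\subseteq W$ nonempty (normal states); $R_\phi\subseteq W_N\times W_N$ for each formula; $R_t\subseteq W\times W$ for each term; $V(w)\subseteq\mathsf{Prop}$ for $w\in W_N$, $V(w)\subseteq\mathsf{Fm}$ for $w\in W\setminus W_N$. Truth: at non-normal $w$, $w\models\phi$ iff $\phi\in V(w)$; at normal $w$: $p$ iff $p\in V(w)$, $\neg,\wedge,\supset$ classical, $\phi>\psi$ iff $R_\phi(w)\subseteq[\psi]$, $t{:}\phi$ iff $R_t(w)\subseteq[\phi]$, with $[\phi]=\{w\in W:w\models\phi\}$. A $\mathsf{J4C}^+_{\mathsf{CS}}$-model is a relational model such that for all $w\in W_N$: (1) $R_\phi(w)\subseteq[\phi]$; (2) if $w\in[\phi]$ then $w\in R_\phi(w)$; (3) $R_c(w)\subseteq[\phi]$ for each $c{:}\phi\in\mathsf{CS}$; (4) $R_{s+t}(w)\subseteq R_s(w)\cap R_t(w)$; (5) for all $v\in R_{s\cdot t}(w)$, all $\phi,\psi$: if $w\in[s{:}(\phi>\psi)\wedge t{:}\phi]$ then $v\in[\psi]$; (7) for all $t$ and $v,u\in W$, if $wR_{!t}v$ and $vR_tu$ then $wR_tu$ (no reflexivity requirement on $R_t$). $T\models_{\mathsf{J4C}^+_{\mathsf{CS}}}\phi$ iff for every such model and every $w\in W_N$ at which all members of $T$ are true, $\phi$ is true at $w$. *)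

(* Defs.v *)
From Stdlib Require Import List Bool.
Import ListNotations.

(* Const, Var, Prop are each taken to be nat (countable sets). *)
Inductive tm : Type :=
| TC   : nat -> tm
| TV   : nat -> tm
| TApp : tm -> tm -> tm
| TSum : tm -> tm -> tm
| TBang : tm -> tm.

Inductive fm : Type :=
| FP    : nat -> fm
| FNeg  : fm -> fm
| FAnd  : fm -> fm -> fm
| FImp  : fm -> fm -> fm
| FCond : fm -> fm -> fm
| FJ    : tm -> fm -> fm.

(* Classical tautology instances: true under every boolean assignment to the
   propositionally atomic subformulas (letters, conditionals, justification
   formulas). *)
Fixpoint beval (v : fm -> bool) (f : fm) : bool :=
  match f with
  | FNeg g => negb (beval v g)
  | FAnd g h => beval v g && beval v h
  | FImp g h => implb (beval v g) (beval v h)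
  | _ => v f
  end.

Definition tautology (f : fm) : Prop := forall v : fm -> bool, beval v f = true.

Inductive IsAxiom : fm -> Prop :=
| A1 : forall f, tautology f -> IsAxiom f
| A2 : forall f g h,
    IsAxiom (FImp (FCond f (FImp g h)) (FImp (FCond f g) (FCond f h)))
| A3 : forall f, IsAxiom (FCond f f)
| A4 : forall f g, IsAxiom (FImp (FCond f g) (FImp f g))
| A5 : forall s t f g,
    IsAxiom (FCond (FAnd (FJ s (FCond f g)) (FJ t f)) (FJ (TApp s t) g))
| A6 : forall s t f, IsAxiom (FCond (FJ s f) (FJ (TSum s t) f))
| A7 : forall s t f, IsAxiom (FCond (FJ t f) (FJ (TSum s t) f))
| A9 : forall t f, IsAxiom (FCond (FJ t f) (FJ (TBang t) (FJ t f))).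

Definition is_CS (CS : fm -> Prop) : Prop :=
  forall f, CS f -> exists c g, f = FJ (TC c) g /\ IsAxiom g.

Inductive Derivable (CS : fm -> Prop) : fm -> Prop :=
| D_ax  : forall f, IsAxiom f -> Derivable CS f
| D_cs  : forall f, CS f -> Derivable CS f
| D_mp  : forall f g, Derivable CS f -> Derivable CS (FImp f g) -> Derivable CS g
| D_rcn : forall f g, Derivable CS g -> Derivable CS (FCond f g).

Fixpoint bigconj (f : fm) (l : list fm) : fm :=
  match l with
  | [] => f
  | g :: l' => FAnd f (bigconj g l')
  end.

Definition derives (CS : fm -> Prop) (T : fm -> Prop) (f : fm) : Prop :=
  Derivable CS f \/
  exists g l, T g /\ (forall h, In h l -> T h) /\ Derivable CS (FImp (bigconj g l) f).

(* Relational models. V w is a set of formulas; at a normal state only the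
   letters FP p in V w matter (i.e. V(w) ⊆ Prop). *)
Record rmodel : Type := {
  W   : Type;
  WN  : W -> Prop;
  RF  : fm -> W -> W -> Prop;
  RT  : tm -> W -> W -> Prop;
  V   : W -> fm -> Prop;
  WN_nonempty : exists w, WN w;
  RF_normal : forall f w v, RF f w v -> WN w /\ WN v
}.

Fixpoint sat (M : rmodel) (w : W M) (f : fm) : Prop :=
  (WN M w ->
     match f with
     | FP p => V M w (FP p)
     | FNeg g => ~ sat M w g
     | FAnd g h => sat M w g /\ sat M w h
     | FImp g h => sat M w g -> sat M w h
     | FCond g h => forall v, RF M g w v -> sat M v h
     | FJ t g => forall v, RT M t w v -> sat M v g
     end)
  /\ (~ WN M w -> V M w f).

Definition is_model (CS : fm -> Prop) (M : rmodel) : Prop :=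
  forall w, WN M w ->
    (forall f v, RF M f w v -> sat M v f) /\
    (forall f, sat M w f -> RF M f w w) /\
    (forall c f v, CS (FJ (TC c) f) -> RT M (TC c) w v -> sat M v f) /\
    (forall s t v, RT M (TSum s t) w v -> RT M s w v /\ RT M t w v) /\
    (forall s t v f g, RT M (TApp s t) w v ->
        sat M w (FAnd (FJ s (FCond f g)) (FJ t f)) -> sat M v g) /\
    (forall t v u, RT M (TBang t) w v -> RT M t v u -> RT M t w u).

Definition entails (CS : fm -> Prop) (T : fm -> Prop) (f : fm) : Prop :=
  forall M : rmodel, is_model CS M ->
    forall w : W M, WN M w -> (forall g, T g -> sat M w g) -> sat M w f.

(* Main.v *)
Require Import Defs.
From Stdlib Require Import List Bool Classical Cantor Arith Lia.
Import ListNotations.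

Fixpoint tcode (t : tm) : nat :=
  match t with
  | TC n => to_nat (0, n)
  | TV n => to_nat (1, n)
  | TApp s u => to_nat (2, to_nat (tcode s, tcode u))
  | TSum s u => to_nat (3, to_nat (tcode s, tcode u))
  | TBang s => to_nat (4, tcode s)
  end.

Fixpoint fcode (f : fm) : nat :=
  match f with
  | FP n => to_nat (0, n)
  | FNeg g => to_nat (1, fcode g)
  | FAnd g h => to_nat (2, to_nat (fcode g, fcode h))
  | FImp g h => to_nat (3, to_nat (fcode g, fcode h))
  | FCond g h => to_nat (4, to_nat (fcode g, fcode h))
  | FJ t g => to_nat (5, to_nat (tcode t, fcode g))
  end.

Lemma to_nat_inj p q : to_nat p = to_nat q -> p = q.
Proof. intro H. rewrite <- (cancel_of_to p), <- (cancel_of_to q), H. reflexivity. Qed.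

Opaque to_nat.
Lemma tcode_inj : forall s t, tcode s = tcode t -> s = t.
Proof.
  induction s; destruct t; simpl; intro H; apply to_nat_inj in H;
  try discriminate; injection H; intros;
  repeat match goal with
  | H : to_nat _ = to_nat _ |- _ => apply to_nat_inj in H; injection H; intros; clear H
  end; subst; f_equal; auto.
Qed.

Lemma fcode_inj : forall f g, fcode f = fcode g -> f = g.
Proof.
  induction f; destruct g; simpl; intro H; apply to_nat_inj in H;
  try discriminate; injection H; intros;
  repeat match goal with
  | H : to_nat _ = to_nat _ |- _ => apply to_nat_inj in H; injection H; intros; clear H
  end; subst; f_equal; auto using tcode_inj.
Qed.
Definition impl (l : list fm) (g : fm) : fm := fold_right FImp g l.
Definition bot : fm := FAnd (FP 0) (FNeg (FP 0)).

Lemma beval_bot v : beval v bot = false.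
Proof. simpl. destruct (v (FP 0)); reflexivity. Qed.

Lemma beval_impl v l g :
  beval v (impl l g) = true <-> ((forall h, In h l -> beval v h = true) -> beval v g = true).
Proof.
  induction l as [|a l IH]; simpl.
  - firstorder.
  - rewrite implb_true_iff, IH. split.
    + intros H1 H2. apply H1; auto.
    + intros H1 H2 H3. apply H1. intros h [<-|Hh]; auto.
Qed.

Section Prf.
Variable CS : fm -> Prop.

Lemma taut_der l g :
  (forall v, (forall h, In h l -> beval v h = true) -> beval v g = true) ->
  Derivable CS (impl l g).
Proof. intro H. apply D_ax, A1. intro v. apply beval_impl, H. Qed.

Lemma taut_mp f g :
  Derivable CS f -> (forall v, beval v f = true -> beval v g = true) -> Derivable CS g.
Proof.
  intros Hf H. apply (D_mp _ f); auto. apply D_ax, A1. intro v. simpl.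
  apply implb_true_iff, H.
Qed.

Definition prv (G : fm -> Prop) (g : fm) : Prop :=
  exists l, (forall h, In h l -> G h) /\ Derivable CS (impl l g).

Lemma prv_der G g : Derivable CS g -> prv G g.
Proof. intro H. exists []. split; simpl; tauto. Qed.

Lemma prv_in G g : G g -> prv G g.
Proof.
  intro H. exists [g]. split. intros h [<-|[]]; auto.
  apply (taut_der [g]). intros v Hv. apply Hv; simpl; auto.
Qed.

Lemma prv_mp G f g : prv G f -> prv G (FImp f g) -> prv G g.
Proof.
  intros [l1 [H1 D1]] [l2 [H2 D2]]. exists (l1 ++ l2). split.
  - intros h Hh. apply in_app_or in Hh. destruct Hh; auto.
  - apply (D_mp _ (impl (l1++l2) (FImp f g))).
    + apply (taut_mp _ _ D2). intros v. rewrite !beval_impl. intros A B.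
      apply A. intros h Hh. apply B. apply in_or_app; auto.
    + apply (D_mp _ (impl (l1++l2) f)).
      * apply (taut_mp _ _ D1). intros v. rewrite !beval_impl. intros A B.
        apply A. intros h Hh. apply B. apply in_or_app; auto.
      * apply D_ax, A1. intro v. simpl. apply implb_true_iff. rewrite !beval_impl.
        intro A. apply implb_true_iff. rewrite !beval_impl. intros B C.
        specialize (A C). specialize (B C). simpl in B. rewrite A in B. exact B.
Qed.

Lemma prv_impl G k g : prv G (impl k g) -> (forall h, In h k -> prv G h) -> prv G g.
Proof.
  revert g; induction k as [|a k IH]; simpl; intros g H1 H2; auto.
  apply IH; auto. apply (prv_mp G a); auto.
Qed.

Lemma prv_taut G k g :
  (forall v, (forall h, In h k -> beval v h = true) -> beval v g = true) ->
  (forall h, In h k -> prv G h) -> prv G g.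
Proof. intros H1 H2. apply (prv_impl G k); auto. apply prv_der, taut_der, H1. Qed.

Lemma prv_mono (G G' : fm -> Prop) g : (forall h, G h -> G' h) -> prv G g -> prv G' g.
Proof. intros H [l [H1 H2]]. exists l; split; auto. Qed.

Definition consistent G := ~ prv G bot.
Definition mcs G := consistent G /\ forall f, G f \/ G (FNeg f).

Lemma mcs_closed G g : mcs G -> prv G g -> G g.
Proof.
  intros [C M] H. destruct (M g) as [|Hn]; auto. exfalso. apply C.
  apply (prv_taut G [g; FNeg g]).
  - intros v Hv. specialize (Hv g (or_introl eq_refl)) as A.
    specialize (Hv (FNeg g) (or_intror (or_introl eq_refl))). simpl in Hv.
    rewrite A in Hv. discriminate.
  - intros h [<-|[<-|[]]]; auto using prv_in.
Qed.

Lemma mcs_taut G k g : mcs G ->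
  (forall v, (forall h, In h k -> beval v h = true) -> beval v g = true) ->
  (forall h, In h k -> G h) -> G g.
Proof.
  intros HG H1 H2. apply mcs_closed; auto. apply (prv_taut G k); auto.
  intros; apply prv_in; auto.
Qed.

Lemma mcs_der G g : mcs G -> Derivable CS g -> G g.
Proof. intros; apply mcs_closed; auto using prv_der. Qed.

Lemma mcs_not G g : mcs G -> G (FNeg g) -> ~ G g.
Proof.
  intros [C M] H1 H2. apply C. apply (prv_taut G [g; FNeg g]).
  - intros v Hv. specialize (Hv g (or_introl eq_refl)) as A.
    specialize (Hv (FNeg g) (or_intror (or_introl eq_refl))). simpl in Hv.
    rewrite A in Hv. discriminate.
  - intros h [<-|[<-|[]]]; auto using prv_in.
Qed.

Lemma mcs_mp G f g : mcs G -> G f -> G (FImp f g) -> G g.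
Proof.
  intros HG H1 H2. apply (mcs_taut G [f; FImp f g]); auto.
  - intros v Hv. specialize (Hv f (or_introl eq_refl)) as A.
    specialize (Hv _ (or_intror (or_introl eq_refl))). simpl in Hv.
    rewrite A in Hv. exact Hv.
  - intros h [<-|[<-|[]]]; auto.
Qed.

Lemma partition (A B : fm -> Prop) l : (forall h, In h l -> A h \/ B h) ->
  exists la lb, (forall h, In h la -> A h) /\ (forall h, In h lb -> B h) /\
   (forall h, In h l -> In h la \/ In h lb).
Proof.
  induction l as [|a l IH]; intro H.
  - exists [], []. simpl; tauto.
  - destruct IH as [la [lb [H1 [H2 H3]]]]. intros; apply H; simpl; auto.
    destruct (H a (or_introl eq_refl)).
    + exists (a::la), lb. split; [|split].
      * intros h [<-|?]; auto.
      * auto.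
      * intros h [<-|Hh]; simpl; auto. destruct (H3 h Hh); auto.
    + exists la, (a::lb). split; [|split].
      * auto.
      * intros h [<-|?]; auto.
      * intros h [<-|Hh]; simpl; auto. destruct (H3 h Hh); auto.
Qed.

Lemma deduction (G : fm -> Prop) f g :
  prv (fun h => G h \/ h = f) g -> prv G (FImp f g).
Proof.
  intros [l [H1 H2]]. destruct (partition G (fun h => h = f) l H1) as [la [lb [A [B C]]]].
  exists la. split; auto. apply (taut_mp _ _ H2). intro v. rewrite !beval_impl.
  intros D E. simpl. apply implb_true_iff. intro F. apply D. intros h Hh.
  destruct (C h Hh) as [X|X]; auto. rewrite (B h X). exact F.
Qed.

End Prf.
Section Lind.
Variable CS : fm -> Prop.
Variable G0 : fm -> Prop.

Fixpoint chain (n : nat) : fm -> Prop :=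
  match n with
  | 0 => G0
  | S n => fun g => chain n g \/
      (fcode g = n /\ consistent CS (fun h => chain n h \/ h = g))
  end.

Definition Lim g := exists n, chain n g.

Lemma chain_mono m n g : m <= n -> chain m g -> chain n g.
Proof. induction 1; simpl; auto. Qed.

Lemma chain_cons : consistent CS G0 -> forall n, consistent CS (chain n).
Proof.
  intros H0 n; induction n as [|n IH]; simpl; auto.
  destruct (classic (exists g, fcode g = n /\ consistent CS (fun h => chain n h \/ h = g)))
    as [[g [Hg Hc]]|Hno].
  - intro P. apply Hc. revert P. apply prv_mono. intros h [Hh|[Hh Hc']]; auto.
    right. apply fcode_inj. congruence.
  - intro P. apply IH. revert P. apply prv_mono. intros h [Hh|[Hh Hc']]; auto.
    exfalso. apply Hno. eauto.
Qed.

Lemma lim_list l : (forall h, In h l -> Lim h) -> exists n, forall h, In h l -> chain n h.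
Proof.
  induction l as [|a l IH]; intro H.
  - exists 0. intros h [].
  - destruct IH as [n Hn]. intros; apply H; simpl; auto.
    destruct (H a (or_introl eq_refl)) as [m Hm].
    exists (Nat.max n m). intros h [<-|Hh].
    + apply (chain_mono m); auto. apply Nat.le_max_r.
    + apply (chain_mono n); auto. apply Nat.le_max_l.
Qed.

Lemma lim_prv g : prv CS Lim g -> exists n, prv CS (chain n) g.
Proof.
  intros [l [H1 H2]]. destruct (lim_list l H1) as [n Hn]. exists n, l; auto.
Qed.

Lemma lim_cons : consistent CS G0 -> consistent CS Lim.
Proof. intros H P. destruct (lim_prv _ P) as [n Hn]. exact (chain_cons H n Hn). Qed.

Lemma lim_key g : Lim g \/ prv CS Lim (FNeg g).
Proof.
  destruct (classic (consistent CS (fun h => chain (fcode g) h \/ h = g))) as [C|C].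
  - left. exists (S (fcode g)). simpl. auto.
  - right. apply NNPP in C. apply deduction in C.
    apply (prv_mono CS (chain (fcode g))). intros h Hh; exists (fcode g); auto.
    apply (prv_taut CS _ [FImp g bot]).
    + intros v Hv. specialize (Hv _ (or_introl eq_refl)). change (implb (beval v g) (beval v bot) = true) in Hv.
      rewrite beval_bot in Hv. simpl. destruct (beval v g); auto.
    + intros h [<-|[]]; auto.
Qed.

Lemma lindenbaum : consistent CS G0 -> mcs CS Lim /\ forall g, G0 g -> Lim g.
Proof.
  intro H. split; [split|].
  - apply lim_cons; auto.
  - intro f. destruct (lim_key f) as [|P]; auto.
    destruct (lim_key (FNeg f)) as [|P']; auto.
    exfalso. apply (lim_cons H). apply (prv_taut CS _ [FNeg f; FNeg (FNeg f)]).
    + intros v Hv. pose proof (Hv _ (or_introl eq_refl)).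
      pose proof (Hv _ (or_intror (or_introl eq_refl))). simpl in *.
      destruct (beval v f); discriminate.
    + intros h [<-|[<-|[]]]; auto.
  - intros g Hg. exists 0. exact Hg.
Qed.
End Lind.
Fixpoint eval (f : fm) : bool :=
  match f with
  | FP _ => false
  | FNeg g => negb (eval g)
  | FAnd g h => eval g && eval h
  | FImp g h => implb (eval g) (eval h)
  | FCond g h => implb (eval g) (eval h)
  | FJ _ _ => true
  end.

Lemma beval_eval f : beval eval f = eval f.
Proof. induction f; simpl; try rewrite IHf; try rewrite IHf1, IHf2; reflexivity. Qed.

Lemma soundness CS : is_CS CS -> forall f, Derivable CS f -> eval f = true.
Proof.
  intros HCS f D; induction D.
  - destruct H; simpl; try reflexivity.
    + rewrite <- beval_eval. apply H.
    + destruct (eval f), (eval g), (eval h); reflexivity.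
    + destruct (eval f); reflexivity.
    + destruct (eval f), (eval g); reflexivity.
  - destruct (HCS f H) as [c [g [-> _]]]. reflexivity.
  - simpl in IHD2. rewrite IHD1 in IHD2. exact IHD2.
  - simpl. rewrite IHD. destruct (eval f); reflexivity.
Qed.

Lemma exists_mcs CS : is_CS CS -> exists G, mcs CS G.
Proof.
  intro HCS. destruct (lindenbaum CS (fun _ => False)) as [H _].
  - intros [l [H1 H2]]. destruct l as [|a l].
    + apply soundness in H2; auto. simpl in H2. destruct (eval (FP 0)); discriminate.
    + exact (H1 a (or_introl eq_refl)).
  - eauto.
Qed.

Section Canon.
Variable CS : fm -> Prop.
Hypothesis HCS : is_CS CS.

Definition cW := (bool * (fm -> Prop))%type.
Definition cWN (w : cW) : Prop := fst w = true /\ mcs CS (snd w).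
Definition cRF (f : fm) (w v : cW) : Prop :=
  cWN w /\ cWN v /\ snd v f /\ forall p, snd w (FCond f p) -> snd v p.
Definition cRT (t : tm) (w v : cW) : Prop :=
  cWN w /\ fst v = false /\ forall p, snd w (FJ t p) -> snd v p.

Lemma cWN_ne : exists w, cWN w.
Proof. destruct (exists_mcs CS HCS) as [G HG]. exists (true, G). split; auto. Qed.

Lemma cRF_normal : forall f w v, cRF f w v -> cWN w /\ cWN v.
Proof. intros f w v [A [B _]]; auto. Qed.

Definition CM : rmodel :=
  {| W := cW; WN := cWN; RF := cRF; RT := cRT; V := fun w f => snd w f;
     WN_nonempty := cWN_ne; RF_normal := cRF_normal |}.

Lemma sat_nn (w : cW) f : ~ cWN w -> (sat CM w f <-> snd w f).
Proof.
  intro H. destruct f; simpl; split; try (intros [_ B]; apply B; exact H);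
  intro B; split; try (intro; contradiction); auto.
Qed.

End Canon.
Section Truth.
Variable CS : fm -> Prop.
Hypothesis HCS : is_CS CS.

Lemma mcs_ax G f : mcs CS G -> IsAxiom f -> G f.
Proof. intros; apply (mcs_der CS); auto. apply D_ax; auto. Qed.

Lemma mcs_A4 G f g : mcs CS G -> G (FCond f g) -> G f -> G g.
Proof.
  intros HG H1 H2. apply (mcs_mp CS G f); auto. apply (mcs_mp CS G (FCond f g)); auto.
  apply mcs_ax; auto. apply A4.
Qed.

Lemma cond_lemma G g : mcs CS G -> forall l c, Derivable CS (impl l c) ->
  (forall p, In p l -> G (FCond g p)) -> G (FCond g c).
Proof.
  intros HG l; induction l as [|a l IH]; simpl; intros c D H.
  - apply (mcs_der CS); auto. apply D_rcn; auto.
  - assert (G (FCond g (FImp a c))).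
    { apply IH; auto. apply (taut_mp _ _ _ D). intro v. simpl. rewrite !implb_true_iff.
      rewrite !beval_impl. intros A B. apply implb_true_iff. intro C. apply A; auto. }
    apply (mcs_mp CS G (FCond g a)); auto.
    apply (mcs_mp CS G (FCond g (FImp a c))); auto.
    apply mcs_ax; auto. apply A2.
Qed.

Lemma truth : forall f (w : cW), cWN CS w -> (sat (CM CS HCS) w f <-> snd w f).
Proof.
  induction f as [p|f IH|f1 IH1 f2 IH2|f1 IH1 f2 IH2|f1 IH1 f2 IH2|t f IH];
  intros w Hw; destruct w as [b G]; pose proof (proj2 Hw) as HG; simpl in HG.
  - simpl. split. intros [A _]; auto. intro A; split; auto.
  - change ((cWN CS (b,G) -> ~ sat (CM CS HCS) (b,G) f) /\ (~ cWN CS (b,G) -> G (FNeg f)) <-> G (FNeg f)).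
    rewrite (IH _ Hw). split.
    + intros [A _]. destruct (proj2 HG f); auto. simpl in A. tauto.
    + intro A. split. intros _ B. exact (mcs_not CS G f HG A B). tauto.
  - change ((cWN CS (b,G) -> sat (CM CS HCS) (b,G) f1 /\ sat (CM CS HCS) (b,G) f2) /\ (~ cWN CS (b,G) -> G (FAnd f1 f2)) <-> G (FAnd f1 f2)).
    rewrite (IH1 _ Hw), (IH2 _ Hw). simpl. split.
    + intros [A _]. destruct (A Hw) as [B C]. apply (mcs_taut CS G [f1; f2]); auto.
      * intros v Hv. simpl. rewrite (Hv f1), (Hv f2); simpl; auto.
      * intros h [<-|[<-|[]]]; auto.
    + intros A. split; [|tauto]. intros _. split.
      * apply (mcs_taut CS G [FAnd f1 f2]); auto.
        intros v Hv. specialize (Hv _ (or_introl eq_refl)). simpl in Hv.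
        apply andb_true_iff in Hv; tauto. intros h [<-|[]]; auto.
      * apply (mcs_taut CS G [FAnd f1 f2]); auto.
        intros v Hv. specialize (Hv _ (or_introl eq_refl)). simpl in Hv.
        apply andb_true_iff in Hv; tauto. intros h [<-|[]]; auto.
  - change ((cWN CS (b,G) -> sat (CM CS HCS) (b,G) f1 -> sat (CM CS HCS) (b,G) f2) /\ (~ cWN CS (b,G) -> G (FImp f1 f2)) <-> G (FImp f1 f2)).
    rewrite (IH1 _ Hw), (IH2 _ Hw). simpl. split.
    + intros [A _]. specialize (A Hw). destruct (proj2 HG f1) as [B|B].
      * apply (mcs_taut CS G [f2]); auto.
        intros v Hv. specialize (Hv _ (or_introl eq_refl)). simpl. rewrite Hv.
        destruct (beval v f1); auto. intros h [<-|[]]; auto.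
      * apply (mcs_taut CS G [FNeg f1]); auto.
        intros v Hv. specialize (Hv _ (or_introl eq_refl)). simpl in *.
        destruct (beval v f1); auto. discriminate. intros h [<-|[]]; auto.
    + intros A. split; [|tauto]. intros _ B. apply (mcs_mp CS G f1); auto.
  - change ((cWN CS (b,G) -> forall v, cRF CS f1 (b,G) v -> sat (CM CS HCS) v f2) /\ (~ cWN CS (b,G) -> G (FCond f1 f2)) <-> G (FCond f1 f2)).
    split.
    + intros [A _]. specialize (A Hw). apply NNPP. intro NG.
      set (S := fun x => G (FCond f1 x) \/ (x = f1 \/ x = FNeg f2)).
      assert (CS_S : consistent CS S).
      { intros [l [H1 H2]].
        destruct (partition CS (fun x => G (FCond f1 x)) (fun x => x = f1 \/ x = FNeg f2) l H1)
          as [la [lb [P1 [P2 P3]]]].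
        assert (D : Derivable CS (impl la (FImp f1 f2))).
        { apply (taut_mp _ _ _ H2). intro v. rewrite !beval_impl. intros X Y.
          simpl. apply implb_true_iff. intro Z.
          destruct (beval v f2) eqn:E; auto. exfalso.
          assert (beval v bot = true); [|rewrite beval_bot in *; discriminate].
          apply X. intros h Hh. destruct (P3 h Hh) as [K|K]; auto.
          destruct (P2 h K) as [->| ->]; auto. simpl. rewrite E; auto. }
        apply NG. apply (mcs_mp CS G (FCond f1 f1)); [auto|apply mcs_ax; auto; apply A3|].
        apply (mcs_mp CS G (FCond f1 (FImp f1 f2))); [auto| |apply mcs_ax; auto; apply A2].
        apply (cond_lemma G f1 HG la (FImp f1 f2)); auto. }
      destruct (lindenbaum CS S CS_S) as [HD Sub].
      assert (R : cRF CS f1 (b,G) (true, Lim CS S)).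
      { split; auto. split. split; auto. simpl. split.
        apply Sub. right; left; auto. intros p Hp. apply Sub. left; auto. }
      specialize (A _ R). rewrite (IH2 (true, Lim CS S)) in A; [|split; auto].
      simpl in A. apply (mcs_not CS _ f2 HD); auto. apply Sub. right; right; auto.
    + intro A. split; [|tauto]. intros _ v [_ [Hv [B C]]].
      rewrite (IH2 _ Hv). apply C. exact A.
  - change ((cWN CS (b,G) -> forall v, cRT CS t (b,G) v -> sat (CM CS HCS) v f) /\ (~ cWN CS (b,G) -> G (FJ t f)) <-> G (FJ t f)).
    split.
    + intros [A _]. specialize (A Hw (false, fun p => G (FJ t p))).
      assert (R : cRT CS t (b,G) (false, fun p => G (FJ t p))).
      { repeat split; auto; apply Hw. }
      specialize (A R). rewrite sat_nn in A; auto. simpl; intros [X _]; discriminate.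
    + intro A. split; [|tauto]. intros _ v [_ [Hv B]].
      apply sat_nn. intros [X _]; congruence. apply B; auto.
Qed.
End Truth.
Lemma model_ok CS (HCS : is_CS CS) : is_model CS (CM CS HCS).
Proof.
  intros w Hw. destruct w as [b G]. pose proof (proj2 Hw) as HG. simpl in HG.
  split; [|split; [|split; [|split; [|split]]]].
  - intros f v [_ [Hv [B _]]]. apply (truth CS HCS); auto.
  - intros f Hf. apply (truth CS HCS) in Hf; auto. split; auto. split; auto. simpl.
    split; auto. intros p Hp. apply (mcs_A4 CS G f); auto.
  - intros c f v Hc [_ [Hv B]]. apply sat_nn. simpl; intros [X _]; congruence.
    apply B. apply (mcs_der CS); auto. apply D_cs; auto.
  - intros s t v [_ [Hv B]]. split; split; auto; split; auto; intros p Hp; apply B.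
    + apply (mcs_A4 CS G (FJ s p)); auto. apply (mcs_ax CS); auto. apply A6.
    + apply (mcs_A4 CS G (FJ t p)); auto. apply (mcs_ax CS); auto. apply A7.
  - intros s t v f g [_ [Hv B]] H. apply (truth CS HCS) in H; auto.
    apply sat_nn. simpl; intros [X _]; congruence.
    apply B. apply (mcs_A4 CS G (FAnd (FJ s (FCond f g)) (FJ t f))); auto. apply (mcs_ax CS); auto. apply A5.
  - intros t v u [_ [Hv _]] [[X _] _]. simpl in *. congruence.
Qed.

Lemma bigconj_beval v a l : beval v (bigconj a l) = true -> forall h, In h (a :: l) -> beval v h = true.
Proof.
  revert a; induction l as [|b l IH]; simpl; intros a H h Hh.
  - destruct Hh as [<-|[]]; auto.
  - apply andb_true_iff in H. destruct H as [H1 H2]. destruct Hh as [<-|Hh]; auto.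
    apply (IH b H2); auto.
Qed.

Theorem mainTheorem14 (CS : fm -> Prop) (HCS : is_CS CS)
  (T : fm -> Prop) (phi : fm) :
  entails CS T phi -> derives CS T phi.
Proof.
  intro E. set (S := fun x => T x \/ x = FNeg phi).
  destruct (classic (consistent CS S)) as [C|C].
  - exfalso. destruct (lindenbaum CS S C) as [HD Sub].
    assert (Hw : cWN CS (true, Lim CS S)) by (split; auto).
    assert (Hphi := E (CM CS HCS) (model_ok CS HCS) (true, Lim CS S) Hw).
    assert (sat (CM CS HCS) (true, Lim CS S) phi) as P.
    { apply Hphi. intros g Hg. apply (truth CS HCS); auto. simpl. apply Sub. left; auto. }
    apply (truth CS HCS) in P; auto. simpl in P.
    apply (mcs_not CS _ phi HD); auto. apply Sub. right; auto.
  - apply NNPP in C. apply deduction in C. destruct C as [l [H1 H2]].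
    destruct l as [|a l].
    + left. apply (taut_mp _ _ _ H2). intro v. simpl.
      destruct (v (FP 0)), (beval v phi); simpl; auto.
    + right. exists a, l. split; [apply H1; simpl; auto|split; [intros; apply H1; simpl; auto|]].
      apply (taut_mp _ _ _ H2). intro v. rewrite beval_impl. intro X.
      simpl. apply implb_true_iff. intro Y. specialize (X (bigconj_beval v a l Y)).
      simpl in X. destruct (v (FP 0)), (beval v phi); simpl in *; auto.
Qed.
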